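(* Let $H\subset Y$ be closed and $k\ge1$. Then $\mathcal R_n^f(H,Z,k)$ is open in $C(X,M)$ (with the source limitation topology) in each of the following cases: (i) $Z\subset M$ is closed and $X,Y$ are metric spaces; (ii) $Z=M$ and $X,Y$ are paracompact.
   Context: Let $(M,\rho)$ be a complete metric space, $Z\subset M$ closed, $n\ge0$, and $f\colon X\to Y$ a perfect surjection between paracompact spaces with $\dim f\le n$. For $H\subset Y$ and $k\ge1$, $\mathcal R_n^f(H,Z,k)$ is the set of $g\in C(X,M)$ such that for each $y\in H$ the set $g(f^{-1}(y))\cap Z$ can be covered by a family of open subsets of $M$ of mesh $\le1/k$ and order $\le n$ (every point of $M$ lies in at most $n+1$ members). The source limitation topology on $C(X,M)$ has as neighborhood base at $f$ the sets $\{g:\rho(g(x),f(x))<\varepsilon(x)\ \forall x\in X\}$, $\varepsilon\colon X\to(0,1]$ continuous. *)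

(* Defs.v *)
From Stdlib Require Import Reals List.
Open Scope R_scope.

Record TopSpace := {
  carrier :> Type;
  is_open : (carrier -> Prop) -> Prop;
  open_full : is_open (fun _ => True);
  open_inter : forall U V, is_open U -> is_open V -> is_open (fun x => U x /\ V x);
  open_union : forall F : (carrier -> Prop) -> Prop,
      (forall U, F U -> is_open U) -> is_open (fun x => exists U, F U /\ U x)
}.

Definition is_closed (X : TopSpace) (A : X -> Prop) : Prop :=
  is_open X (fun x => ~ A x).

Definition finite_type (I : Type) : Prop := exists l : list I, forall i, In i l.

(* "order <= n" on A : no point of A lies in n+2 distinct members of the family *)
Definition order_le {T I : Type} (U : I -> T -> Prop) (A : T -> Prop) (n : nat) : Prop :=
  forall js : list I, NoDup js -> length js = S (S n) ->
    forall x, A x -> exists j, In j js /\ ~ U j x.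

Definition compact_subset (X : TopSpace) (A : X -> Prop) : Prop :=
  forall (I : Type) (U : I -> X -> Prop), (forall i, is_open X (U i)) ->
    (forall x, A x -> exists i, U i x) ->
    exists l : list I, forall x, A x -> exists i, In i l /\ U i x.

(* covering dimension of the subspace A of X is <= n (Cech-Lebesgue):
   every finite cover of A by (traces of) open sets has a finite open
   refinement (on A) of order <= n *)
Definition covdim_le (X : TopSpace) (A : X -> Prop) (n : nat) : Prop :=
  forall (I : Type) (U : I -> X -> Prop), finite_type I ->
    (forall i, is_open X (U i)) -> (forall x, A x -> exists i, U i x) ->
    exists (J : Type) (V : J -> X -> Prop),
      finite_type J /\ (forall j, is_open X (V j)) /\
      (forall x, A x -> exists j, V j x) /\
      (forall j, exists i, forall x, A x -> V j x -> U i x) /\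
      order_le V A n.

Definition hausdorff (X : TopSpace) : Prop :=
  forall x y : X, x <> y -> exists U V, is_open X U /\ is_open X V /\ U x /\ V y /\
    forall z, ~ (U z /\ V z).

Definition paracompact (X : TopSpace) : Prop :=
  hausdorff X /\
  forall (I : Type) (U : I -> X -> Prop), (forall i, is_open X (U i)) ->
    (forall x, exists i, U i x) ->
    exists (J : Type) (V : J -> X -> Prop),
      (forall j, is_open X (V j)) /\ (forall x, exists j, V j x) /\
      (forall j, exists i, forall x, V j x -> U i x) /\
      (forall x, exists W, is_open X W /\ W x /\
         exists l : list J, forall j, (exists z, W z /\ V j z) -> In j l).

Definition continuous (X Y : TopSpace) (f : X -> Y) : Prop :=
  forall V, is_open Y V -> is_open X (fun x => V (f x)).

Definition closed_map (X Y : TopSpace) (f : X -> Y) : Prop :=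
  forall A, is_closed X A -> is_closed Y (fun y => exists x, A x /\ f x = y).

Definition perfect_map (X Y : TopSpace) (f : X -> Y) : Prop :=
  continuous X Y f /\ closed_map X Y f /\
  forall y, compact_subset X (fun x => f x = y).

Definition dim_map_le (X Y : TopSpace) (f : X -> Y) (n : nat) : Prop :=
  forall y, covdim_le X (fun x => f x = y) n.

Definition is_metric {T : Type} (d : T -> T -> R) : Prop :=
  (forall x y, 0 <= d x y) /\ (forall x y, d x y = 0 <-> x = y) /\
  (forall x y, d x y = d y x) /\ (forall x y z, d x z <= d x y + d y z).

Definition metric_open {T : Type} (d : T -> T -> R) (U : T -> Prop) : Prop :=
  forall x, U x -> exists r, 0 < r /\ forall y, d x y < r -> U y.

Definition metrizable (X : TopSpace) : Prop :=
  exists d : X -> X -> R, is_metric d /\ forall U, is_open X U <-> metric_open d U.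

Record MetricSpace := {
  mcarrier :> Type;
  dist : mcarrier -> mcarrier -> R;
  dist_metric : is_metric dist
}.

Definition complete (M : MetricSpace) : Prop :=
  forall u : nat -> M,
    (forall eps, 0 < eps -> exists N, forall p q, (p >= N)%nat -> (q >= N)%nat ->
        dist M (u p) (u q) < eps) ->
    exists l, forall eps, 0 < eps -> exists N, forall p, (p >= N)%nat -> dist M (u p) l < eps.

Definition mopen (M : MetricSpace) (U : M -> Prop) : Prop := metric_open (dist M) U.
Definition mclosed (M : MetricSpace) (A : M -> Prop) : Prop := mopen M (fun p => ~ A p).

Definition mcontinuous (X : TopSpace) (M : MetricSpace) (g : X -> M) : Prop :=
  forall U, mopen M U -> is_open X (fun x => U (g x)).

Definition rcontinuous (X : TopSpace) (e : X -> R) : Prop :=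
  forall U, metric_open (fun a b => Rabs (a - b)) U -> is_open X (fun x => U (e x)).

Definition Rnf (X Y : TopSpace) (M : MetricSpace) (f : X -> Y) (n : nat)
    (H : Y -> Prop) (Z : M -> Prop) (k : nat) (g : X -> M) : Prop :=
  mcontinuous X M g /\
  forall y, H y ->
    exists (I : Type) (V : I -> M -> Prop),
      (forall i, mopen M (V i)) /\
      (forall x, f x = y -> Z (g x) -> exists i, V i (g x)) /\
      (forall i a b, V i a -> V i b -> dist M a b <= 1 / INR k) /\
      order_le V (fun _ => True) n.

Definition sl_open (X : TopSpace) (M : MetricSpace) (S : (X -> M) -> Prop) : Prop :=
  forall g, S g -> mcontinuous X M g ->
    exists eps : X -> R, rcontinuous X eps /\ (forall x, 0 < eps x <= 1) /\
      forall h, mcontinuous X M h -> (forall x, dist M (h x) (g x) < eps x) -> S h.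

(* Main.v *)
Require Import Defs.
From Stdlib Require Import Reals Arith ZArith List Lra Lia Classical FunctionalExtensionality PropExtensionality ClassicalEpsilon.
Open Scope R_scope.

Lemma pred_ext {T : Type} (P Q : T -> Prop) : (forall x, P x <-> Q x) -> P = Q.
Proof. intro H. apply functional_extensionality. intro x. apply propositional_extensionality. apply H. Qed.

Lemma open_ext (Y : TopSpace) (P Q : Y -> Prop) :
  (forall x, P x <-> Q x) -> is_open Y P -> is_open Y Q.
Proof. intros H HP. rewrite <- (pred_ext P Q H). exact HP. Qed.

Lemma open_empty (Y : TopSpace) : is_open Y (fun _ => False).
Proof.
  apply (open_ext Y (fun x => exists U, (fun _ : Y -> Prop => False) U /\ U x)).
  - intro x; split; [intros [U [[] _]] | intros []].
  - apply open_union. intros U [].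
Qed.

Lemma open_idx (Y : TopSpace) (K : Type) (S : K -> Y -> Prop) :
  (forall k, is_open Y (S k)) -> is_open Y (fun z => exists k, S k z).
Proof.
  intro HS.
  apply (open_ext Y (fun x => exists U, (fun U => exists k, U = S k) U /\ U x)).
  - intro x; split.
    + intros [U [[k ->] Hx]]. exists k; exact Hx.
    + intros [k Hk]. exists (S k). split; [exists k; reflexivity | exact Hk].
  - apply open_union. intros U [k ->]. apply HS.
Qed.

Lemma open_local (Y : TopSpace) (P : Y -> Prop) :
  (forall y, P y -> exists N, is_open Y N /\ N y /\ forall z, N z -> P z) -> is_open Y P.
Proof.
  intro H.
  apply (open_ext Y (fun x => exists U, (fun U => is_open Y U /\ forall z, U z -> P z) U /\ U x)).
  - intro x; split.
    + intros [U [[_ HU] Hx]]. exact (HU x Hx).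
    + intro Hx. destruct (H x Hx) as [N [HN [Nx HNP]]]. exists N. auto.
  - apply open_union. intros U [HU _]. exact HU.
Qed.

Lemma open_cond (Y : TopSpace) (P : Prop) (S : Y -> Prop) :
  is_open Y S -> is_open Y (fun z => P /\ S z).
Proof.
  intro HS. destruct (classic P) as [HP | HP].
  - apply (open_ext Y S); [intro x; tauto | exact HS].
  - apply (open_ext Y (fun _ => False)); [intro x; tauto | apply open_empty].
Qed.

Lemma open_inter_list (Y : TopSpace) (K : Type) (l : list K) (S : K -> Y -> Prop) :
  (forall k, In k l -> is_open Y (S k)) -> is_open Y (fun z => forall k, In k l -> S k z).
Proof.
  induction l as [|a l IH]; intro H.
  - apply (open_ext Y (fun _ => True)); [intro x; simpl; tauto | apply open_full].
  - apply (open_ext Y (fun z => S a z /\ (forall k, In k l -> S k z))).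
    + intro x; split.
      * intros [Ha Hl] k [<- | Hk]; auto.
      * intro Hx. split; [apply Hx; left; reflexivity | intros k Hk; apply Hx; right; exact Hk].
    + apply open_inter; [apply H; left; reflexivity | apply IH; intros k Hk; apply H; right; exact Hk].
Qed.

Lemma closed_compl_open (Y : TopSpace) (E : Y -> Prop) :
  is_open Y E -> is_closed Y (fun z => ~ E z).
Proof. intro HE. unfold is_closed. apply (open_ext Y E); [intro x; tauto | exact HE]. Qed.

Lemma closed_cond (Y : TopSpace) (P : Prop) (S : Y -> Prop) :
  is_closed Y S -> is_closed Y (fun z => P /\ S z).
Proof.
  unfold is_closed. intro HS. destruct (classic P) as [HP | HP].
  - apply (open_ext Y (fun z => ~ S z)); [intro x; tauto | exact HS].
  - apply (open_ext Y (fun _ => True)); [intro x; tauto | apply open_full].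
Qed.

Definition cl (Y : TopSpace) (Q : Y -> Prop) (z : Y) : Prop :=
  forall O, is_open Y O -> O z -> exists w, O w /\ Q w.

Lemma cl_closed (Y : TopSpace) (Q : Y -> Prop) : is_closed Y (cl Y Q).
Proof.
  unfold is_closed. apply open_local. intros y Hy.
  unfold cl in Hy. apply not_all_ex_not in Hy. destruct Hy as [O HO].
  assert (HOo : is_open Y O) by tauto. assert (Oy : O y) by tauto.
  assert (Hn : ~ exists w, O w /\ Q w) by tauto.
  exists O. split; [exact HOo|]. split; [exact Oy|].
  intros z Oz Hz. apply Hn. exact (Hz O HOo Oz).
Qed.

Lemma cl_incl (Y : TopSpace) (Q : Y -> Prop) z : Q z -> cl Y Q z.
Proof. intros Hz O _ Oz. exists z; auto. Qed.

Lemma cl_min (Y : TopSpace) (Q D : Y -> Prop) :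
  is_closed Y D -> (forall z, Q z -> D z) -> forall z, cl Y Q z -> D z.
Proof.
  intros HD HQ z Hz. apply NNPP. intro nD.
  destruct (Hz _ HD nD) as [w [nDw Qw]]. apply nDw, HQ, Qw.
Qed.

Lemma locfin_union_closed (Y : TopSpace) (K : Type) (Cl : K -> Y -> Prop) :
  (forall k, is_closed Y (Cl k)) ->
  (forall y, exists Q, is_open Y Q /\ Q y /\ exists l : list K,
      forall k, (exists z, Q z /\ Cl k z) -> In k l) ->
  is_closed Y (fun z => exists k, Cl k z).
Proof.
  intros HC Hlf. unfold is_closed. apply open_local. intros y Hy.
  destruct (Hlf y) as [Q [HQ [Qy [l Hl]]]].
  exists (fun z => Q z /\ forall k, In k l -> ~ Cl k z). split; [|split].
  - apply open_inter; [exact HQ|]. apply open_inter_list. intros k _. apply HC.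
  - split; [exact Qy|]. intros k _ Hk. apply Hy. exists k; exact Hk.
  - intros z [Qz Hz] [k Hk]. apply (Hz k); [apply Hl; exists z; auto | exact Hk].
Qed.

Lemma choice_fun {A B : Type} (P : A -> B -> Prop) :
  (forall a, exists b, P a b) -> exists f : A -> B, forall a, P a (f a).
Proof.
  intro H. exists (fun a => proj1_sig (constructive_indefinite_description _ (H a))).
  intro a. exact (proj2_sig (constructive_indefinite_description _ (H a))).
Qed.

Definition pc2 (Y : TopSpace) : Prop :=
  forall (I : Type) (U : I -> Y -> Prop), (forall i, is_open Y (U i)) ->
    (forall x, exists i, U i x) ->
    exists (J : Type) (V : J -> Y -> Prop),
      (forall j, is_open Y (V j)) /\ (forall x, exists j, V j x) /\
      (forall j, exists i, forall x, V j x -> U i x) /\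
      (forall x, exists W, is_open Y W /\ W x /\
         exists l : list J, forall j, (exists z, W z /\ V j z) -> In j l).

Lemma sep_gen (Y : TopSpace) (A B : Y -> Prop) :
  pc2 Y -> is_closed Y B ->
  (forall b, B b -> exists U V, is_open Y U /\ is_open Y V /\ U b /\
       (forall a, A a -> V a) /\ (forall z, U z -> V z -> False)) ->
  exists N E, is_open Y N /\ is_open Y E /\ (forall a, A a -> N a) /\
    (forall b, B b -> E b) /\ (forall z, N z -> E z -> False).
Proof.
  intros HP HB Hsep.
  set (T := {uv : (Y -> Prop) * (Y -> Prop) | exists b, B b /\ is_open Y (fst uv) /\
         is_open Y (snd uv) /\ fst uv b /\ (forall a, A a -> snd uv a) /\
         (forall z, fst uv z -> snd uv z -> False)}).
  set (Uc := fun (i : option T) => match i with None => fun z => ~ B z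
                                   | Some t => fst (proj1_sig t) end).
  destruct (HP (option T) Uc) as [J [R [HRo [HRc [HRr HRl]]]]].
  - intros [t|]; simpl.
    + destruct (proj2_sig t) as [b [_ [H _]]]. exact H.
    + exact HB.
  - intro x. destruct (classic (B x)) as [Bx | nBx].
    + destruct (Hsep x Bx) as [U [V [HU [HV [Ux [HA Hd]]]]]].
      assert (P : exists b, B b /\ is_open Y (fst (U, V)) /\
         is_open Y (snd (U, V)) /\ fst (U, V) b /\ (forall a, A a -> snd (U, V) a) /\
         (forall z, fst (U, V) z -> snd (U, V) z -> False)) by (exists x; simpl; repeat split; auto).
      exists (Some (exist _ (U, V) P)). simpl. exact Ux.
    + exists None. exact nBx.
  - destruct (choice_fun _ HRr) as [rho Hrho].
    set (E := fun z => exists j, (exists t, rho j = Some t) /\ R j z).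
    exists (fun x => exists U, (fun U => is_open Y U /\ forall w, U w -> ~ E w) U /\ U x), E.
    split; [|split; [|split; [|split]]].
    + apply open_union. tauto.
    + apply open_idx. intro j. apply open_cond, HRo.
    + intros a Aa. destruct (HRl a) as [Q [HQ [Qa [l Hl]]]].
      set (Sj := fun j => match rho j with Some t => snd (proj1_sig t) | None => fun _ : Y => True end).
      exists (fun z => Q z /\ forall j, In j l -> Sj j z). split; [split|].
      * apply open_inter; [exact HQ|]. apply open_inter_list. intros j _. unfold Sj.
        destruct (rho j) as [t|]; [|apply open_full].
        destruct (proj2_sig t) as [b [_ [_ [H _]]]]. exact H.
      * intros w [Qw Hw] [j [[t Ht] Rw]].
        assert (Hin : In j l) by (apply Hl; exists w; auto).
        specialize (Hw j Hin). unfold Sj in Hw. rewrite Ht in Hw.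
        specialize (Hrho j w Rw). rewrite Ht in Hrho. simpl in Hrho.
        destruct (proj2_sig t) as [b [_ [_ [_ [_ [_ Hd]]]]]]. exact (Hd w Hrho Hw).
      * split; [exact Qa|]. intros j _. unfold Sj. destruct (rho j) as [t|]; [|exact I].
        destruct (proj2_sig t) as [b [_ [_ [_ [_ [H _]]]]]]. exact (H a Aa).
    + intros b Bb. destruct (HRc b) as [j Hj]. exists j. split; [|exact Hj].
      specialize (Hrho j b Hj). destruct (rho j) as [t|]; [exists t; reflexivity|].
      simpl in Hrho. contradiction.
    + intros z [U [[_ HU] Uz]] Ez. exact (HU z Uz Ez).
Qed.

Lemma regular_pc (Y : TopSpace) : paracompact Y ->
  forall W y, is_open Y W -> W y -> exists N D, is_open Y N /\ is_closed Y D /\ N y /\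
    (forall z, N z -> D z) /\ (forall z, D z -> W z).
Proof.
  intros [Hh HP] W y HW Wy.
  destruct (sep_gen Y (fun z => z = y) (fun z => ~ W z) HP) as [N [E [HN [HE [HA [HB Hd]]]]]].
  - unfold is_closed. apply (open_ext Y W); [intro; tauto | exact HW].
  - intros b nWb. assert (b <> y) by (intro; subst; contradiction).
    destruct (Hh b y H) as [U [V [HU [HV [Ub [Vy Hd]]]]]].
    exists U, V. repeat split; auto. intros a ->. exact Vy. intros z Uz Vz. apply (Hd z); auto.
  - exists N, (fun z => ~ E z). repeat split.
    + exact HN.
    + apply closed_compl_open, HE.
    + apply HA. reflexivity.
    + intros z Nz Ez. exact (Hd z Nz Ez).
    + intros z nE. apply NNPP. intro nW. exact (nE (HB z nW)).
Qed.

Lemma normal_pc (Y : TopSpace) : paracompact Y ->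
  forall C W, is_closed Y C -> is_open Y W -> (forall z, C z -> W z) ->
  exists U D, is_open Y U /\ is_closed Y D /\ (forall z, C z -> U z) /\
    (forall z, U z -> D z) /\ (forall z, D z -> W z).
Proof.
  intros HPc C W HC HW HCW. pose proof HPc as [Hh HP].
  destruct (sep_gen Y C (fun z => ~ W z) HP) as [N [E [HN [HE [HA [HB Hd]]]]]].
  - unfold is_closed. apply (open_ext Y W); [intro; tauto | exact HW].
  - intros b nWb.
    destruct (regular_pc Y HPc (fun z => ~ C z) b HC) as [N [D [HN [HD [Nb [HND HDC]]]]]].
    + intro Cb. exact (nWb (HCW b Cb)).
    + exists N, (fun z => ~ D z). split; [exact HN|]. split; [exact HD|].
      split; [exact Nb|]. split; [intros a Ca Da; exact (HDC a Da Ca)|].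
      intros z Nz nDz. exact (nDz (HND z Nz)).
  - exists N, (fun z => ~ E z). split; [exact HN|]. split; [|split; [exact HA|split]].
    + apply closed_compl_open, HE.
    + intros z Nz Ez. exact (Hd z Nz Ez).
    + intros z nE. apply NNPP. intro nW. exact (nE (HB z nW)).
Qed.

Lemma shrink_pc (Y : TopSpace) (J : Type) (P : J -> Y -> Prop) : paracompact Y ->
  (forall j, is_open Y (P j)) -> (forall x, exists j, P j x) ->
  exists C : J -> Y -> Prop, (forall j, is_closed Y (C j)) /\
    (forall j z, C j z -> P j z) /\ (forall z, exists j, C j z).
Proof.
  intros HPc HPo HPcov. pose proof HPc as [Hh HP].
  set (T := {t : (Y -> Prop) * (Y -> Prop) * J | is_open Y (fst (fst t)) /\
          is_closed Y (snd (fst t)) /\ (forall z, fst (fst t) z -> snd (fst t) z) /\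
          (forall z, snd (fst t) z -> P (snd t) z)}).
  destruct (HP T (fun t => fst (fst (proj1_sig t)))) as [K [Q [HQo [HQc [HQr HQl]]]]].
  - intro t. destruct (proj2_sig t) as [H _]. exact H.
  - intro x. destruct (HPcov x) as [j Pj].
    destruct (regular_pc Y HPc (P j) x (HPo j) Pj) as [N [D [HN [HD [Nx [HND HDP]]]]]].
    assert (Pr : is_open Y (fst (fst (N, D, j))) /\
          is_closed Y (snd (fst (N, D, j))) /\ (forall z, fst (fst (N, D, j)) z -> snd (fst (N, D, j)) z) /\
          (forall z, snd (fst (N, D, j)) z -> P (snd (N, D, j)) z)) by (simpl; auto).
    exists (exist _ (N, D, j) Pr). exact Nx.
  - destruct (choice_fun _ HQr) as [tau Htau].
    exists (fun j z => exists k, (fun k z => snd (proj1_sig (tau k)) = j /\ cl Y (Q k) z) k z).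
    split; [|split].
    + intro j. apply locfin_union_closed.
      * intro k. apply closed_cond, cl_closed.
      * intro y. destruct (HQl y) as [W [HW [Wy [l Hl]]]]. exists W. split; [exact HW|].
        split; [exact Wy|]. exists l. intros k [z [Wz [_ Hz]]]. apply Hl.
        destruct (Hz W HW Wz) as [w Hw]. exists w; exact Hw.
    + intros j z [k [Hj Hz]]. subst j.
      destruct (proj2_sig (tau k)) as [_ [HD [HND HDP]]].
      apply HDP. revert z Hz. apply cl_min; [exact HD|].
      intros w Qw. apply HND. apply Htau. exact Qw.
    + intro z. destruct (HQc z) as [k Hk]. exists (snd (proj1_sig (tau k))), k.
      split; [reflexivity | apply cl_incl, Hk].
Qed.

Lemma INR_lt_pow2 (N : nat) : INR N < 2 ^ N.
Proof.
  induction N as [|N IH]; [simpl; lra|]. rewrite S_INR. simpl (2 ^ S N).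
  assert (1 <= 2 ^ N) by (apply pow_R1_Rle; lra). lra.
Qed.

Lemma dyadic_dense (x y : R) : 0 <= x -> x < y -> y <= 1 ->
  exists n j, (j <= 2 ^ n)%nat /\ x < INR j / 2 ^ n < y.
Proof.
  intros Hx Hxy Hy.
  set (z := up (1 / (y - x))).
  destruct (archimed (1 / (y - x))) as [Hz1 _].
  assert (Hpos : 0 < 1 / (y - x)) by (apply Rdiv_lt_0_compat; lra).
  assert (Hz0 : (0 <= z)%Z) by (apply le_IZR; fold z in Hz1; lra).
  set (N := Z.to_nat z).
  assert (HN : INR N = IZR z) by (unfold N; rewrite INR_IZR_INZ, Z2Nat.id; auto).
  assert (HP : 0 < 2 ^ N) by (apply pow_lt; lra).
  assert (H2N : 1 / (y - x) < 2 ^ N) by (pose proof (INR_lt_pow2 N); fold z in Hz1; lra).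
  assert (Hstep : 1 / 2 ^ N < y - x).
  { apply (Rmult_lt_reg_r (2 ^ N)); [exact HP|].
    unfold Rdiv. rewrite Rmult_assoc, Rinv_l by lra. rewrite Rmult_1_l.
    apply (Rmult_lt_reg_l (/ (y - x))); [apply Rinv_0_lt_compat; lra|].
    rewrite <- Rmult_assoc, Rinv_l by lra. lra. }
  set (w := up (x * 2 ^ N)).
  destruct (archimed (x * 2 ^ N)) as [Hw1 Hw2]. fold w in Hw1, Hw2.
  assert (Hw0 : (0 <= w)%Z) by (apply le_IZR; assert (0 <= x * 2 ^ N) by (apply Rmult_le_pos; lra); lra).
  set (j := Z.to_nat w).
  assert (Hj : INR j = IZR w) by (unfold j; rewrite INR_IZR_INZ, Z2Nat.id; auto).
  assert (E1 : x < INR j / 2 ^ N).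
  { apply (Rmult_lt_reg_r (2 ^ N)); [exact HP|]. unfold Rdiv.
    rewrite Rmult_assoc, Rinv_l by lra. lra. }
  assert (E2 : INR j / 2 ^ N < y).
  { assert (INR j / 2 ^ N <= x + 1 / 2 ^ N); [|lra].
    apply (Rmult_le_reg_r (2 ^ N)); [exact HP|]. unfold Rdiv.
    rewrite Rmult_plus_distr_r, !Rmult_assoc, Rinv_l by lra. lra. }
  exists N, j. split; [|split; assumption].
  apply INR_le. rewrite pow_INR. replace (INR 2) with 2 by (simpl; lra).
  assert (INR j < 2 ^ N); [|lra].
  apply (Rmult_lt_reg_r (/ 2 ^ N)); [apply Rinv_0_lt_compat; lra|].
  rewrite Rinv_r by lra. unfold Rdiv in E2. lra.
Qed.

Definition sh_spec (Y : TopSpace) (C W : Y -> Prop) (p : (Y -> Prop) * (Y -> Prop)) : Prop :=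
  is_open Y (fst p) /\ is_closed Y (snd p) /\ (forall z, C z -> fst p z) /\
  (forall z, fst p z -> snd p z) /\ (forall z, snd p z -> W z).

Definition sh (Y : TopSpace) (C W : Y -> Prop) : (Y -> Prop) * (Y -> Prop) :=
  epsilon (inhabits (C, C)) (sh_spec Y C W).

Lemma sh_ok (Y : TopSpace) (C W : Y -> Prop) : paracompact Y ->
  is_closed Y C -> is_open Y W -> (forall z, C z -> W z) -> sh_spec Y C W (sh Y C W).
Proof.
  intros HP HC HW HCW. unfold sh. apply epsilon_spec.
  destruct (normal_pc Y HP C W HC HW HCW) as [U [D H]]. exists (U, D). exact H.
Qed.

Fixpoint lev (Y : TopSpace) (A W : Y -> Prop) (n j : nat) : (Y -> Prop) * (Y -> Prop) :=
  match n with
  | O => if Nat.eqb j 0 then sh Y A W else (W, fun _ => True)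
  | S n' => if Nat.even j then lev Y A W n' (Nat.div2 j)
            else sh Y (snd (lev Y A W n' (Nat.div2 j))) (fst (lev Y A W n' (S (Nat.div2 j))))
  end.

Lemma lev_S (Y : TopSpace) A W n j : lev Y A W (S n) j =
  if Nat.even j then lev Y A W n (Nat.div2 j)
  else sh Y (snd (lev Y A W n (Nat.div2 j))) (fst (lev Y A W n (S (Nat.div2 j)))).
Proof. reflexivity. Qed.

Lemma lev_even (Y : TopSpace) A W n q : lev Y A W (S n) (2 * q) = lev Y A W n q.
Proof. rewrite lev_S. rewrite Nat.even_even, Nat.div2_double. reflexivity. Qed.

Lemma lev_odd (Y : TopSpace) A W n q : lev Y A W (S n) (S (2 * q)) =
  sh Y (snd (lev Y A W n q)) (fst (lev Y A W n (S q))).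
Proof.
  rewrite lev_S. replace (S (2 * q)) with (2 * q + 1)%nat by lia.
  rewrite Nat.even_odd. replace (2 * q + 1)%nat with (S (2 * q)) by lia.
  rewrite Nat.div2_succ_double. reflexivity.
Qed.

Definition Inv (Y : TopSpace) (A W : Y -> Prop) (n : nat) : Prop :=
  (forall j, (j <= 2 ^ n)%nat -> is_open Y (fst (lev Y A W n j)) /\
     is_closed Y (snd (lev Y A W n j)) /\
     (forall z, fst (lev Y A W n j) z -> snd (lev Y A W n j) z) /\
     (forall z, fst (lev Y A W n j) z -> W z)) /\
  (forall j, (j < 2 ^ n)%nat -> forall z, snd (lev Y A W n j) z -> fst (lev Y A W n (S j)) z) /\
  (forall z, A z -> fst (lev Y A W n 0) z) /\
  lev Y A W n (2 ^ n) = (W, fun _ => True).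

Lemma closed_full (Y : TopSpace) : is_closed Y (fun _ => True).
Proof. unfold is_closed. apply (open_ext Y (fun _ => False)); [intro; tauto | apply open_empty]. Qed.

Lemma inv_all (Y : TopSpace) (A W : Y -> Prop) : paracompact Y ->
  is_closed Y A -> is_open Y W -> (forall z, A z -> W z) -> forall n, Inv Y A W n.
Proof.
  intros HP HA HW HAW. induction n as [|n IH].
  - pose proof (sh_ok Y A W HP HA HW HAW) as [S1 [S2 [S3 [S4 S5]]]].
    split; [|split; [|split]].
    + intros j Hj. simpl in Hj. destruct j as [|[|j]]; simpl; [|split; [exact HW|]|lia].
      * split; [exact S1|]. split; [exact S2|]. split; [exact S4|]. intros z Hz; auto.
      * split; [apply closed_full|]. split; auto.
    + intros j Hj. simpl in Hj. assert (j = 0%nat) by lia. subst j. simpl. exact S5.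
    + simpl. exact S3.
    + reflexivity.
  - destruct IH as [I1 [I2 [I3 I4]]].
    assert (Hodd : forall q, (q < 2 ^ n)%nat -> sh_spec Y (snd (lev Y A W n q)) (fst (lev Y A W n (S q)))
                     (lev Y A W (S n) (S (2 * q)))).
    { intros q Hq. rewrite lev_odd. apply sh_ok; [exact HP| | |].
      - apply (I1 q); lia.
      - apply (I1 (S q)); lia.
      - apply I2; exact Hq. }
    assert (Hpow : (2 ^ S n = 2 * 2 ^ n)%nat) by reflexivity.
    split; [|split; [|split]].
    + intros j Hj. destruct (Nat.Even_or_Odd j) as [[q ->] | [q ->]].
      * rewrite lev_even. apply I1. lia.
      * replace (2 * q + 1)%nat with (S (2 * q)) by lia.
        assert (Hq : (q < 2 ^ n)%nat) by lia.
        destruct (Hodd q Hq) as [S1 [S2 [S3 [S4 S5]]]].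
        split; [exact S1|]. split; [exact S2|]. split; [exact S4|].
        intros z Hz. apply (I1 (S q)); [lia|]. apply S5, S4, Hz.
    + intros j Hj. destruct (Nat.Even_or_Odd j) as [[q ->] | [q ->]].
      * rewrite lev_even. assert (Hq : (q < 2 ^ n)%nat) by lia.
        destruct (Hodd q Hq) as [S1 [S2 [S3 [S4 S5]]]]. exact S3.
      * replace (2 * q + 1)%nat with (S (2 * q)) by lia.
        assert (Hq : (q < 2 ^ n)%nat) by lia.
        destruct (Hodd q Hq) as [S1 [S2 [S3 [S4 S5]]]].
        replace (S (S (2 * q))) with (2 * S q)%nat by lia. rewrite lev_even. exact S5.
    + replace 0%nat with (2 * 0)%nat by lia. rewrite lev_even. exact I3.
    + rewrite Hpow, lev_even. exact I4.
Qed.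

Lemma lev_lift (Y : TopSpace) A W n p j : lev Y A W (n + p) (2 ^ p * j) = lev Y A W n j.
Proof.
  induction p as [|p IH].
  - rewrite Nat.add_0_r. simpl. rewrite Nat.add_0_r. reflexivity.
  - rewrite Nat.add_succ_r. replace (2 ^ S p * j)%nat with (2 * (2 ^ p * j))%nat
      by (simpl; lia). rewrite lev_even. exact IH.
Qed.

Lemma chain_level (Y : TopSpace) A W N : Inv Y A W N -> forall a b, (a < b)%nat -> (b <= 2 ^ N)%nat ->
  forall z, snd (lev Y A W N a) z -> fst (lev Y A W N b) z.
Proof.
  intros [I1 [I2 _]] a b Hab. induction b as [|b IH]; [lia|]. intros Hb z Hz.
  apply I2; [lia|]. destruct (Nat.eq_dec a b) as [-> | Hne]; [exact Hz|].
  apply (I1 b); [lia|]. apply IH; [lia|lia|exact Hz].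
Qed.

Definition dv (n j : nat) : R := INR j / 2 ^ n.

Lemma dv_cmp (n m j i : nat) : dv n j <= dv m i -> (2 ^ m * j <= 2 ^ n * i)%nat.
Proof.
  unfold dv. intro H. apply INR_le. rewrite !mult_INR, !pow_INR. replace (INR 2) with 2 by (simpl; lra).
  assert (0 < 2 ^ n) by (apply pow_lt; lra). assert (0 < 2 ^ m) by (apply pow_lt; lra).
  apply (Rmult_le_compat_r (2 ^ n * 2 ^ m)) in H; [|nra].
  unfold Rdiv in H. replace (INR j * / 2 ^ n * (2 ^ n * 2 ^ m)) with (2 ^ m * INR j) in H
    by (field; lra).
  replace (INR i * / 2 ^ m * (2 ^ n * 2 ^ m)) with (2 ^ n * INR i) in H by (field; lra).
  exact H.
Qed.

Lemma dv_cmp_lt (n m j i : nat) : dv n j < dv m i -> (2 ^ m * j < 2 ^ n * i)%nat.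
Proof.
  intro H. destruct (Nat.lt_ge_cases (2 ^ m * j) (2 ^ n * i)) as [h|h]; [exact h|].
  exfalso. assert (dv m i <= dv n j); [|lra].
  unfold dv. apply le_INR in h. rewrite !mult_INR, !pow_INR in h. replace (INR 2) with 2 in h by (simpl; lra).
  assert (0 < 2 ^ n) by (apply pow_lt; lra). assert (0 < 2 ^ m) by (apply pow_lt; lra).
  apply (Rmult_le_reg_r (2 ^ n * 2 ^ m)); [nra|]. unfold Rdiv.
  replace (INR j * / 2 ^ n * (2 ^ n * 2 ^ m)) with (2 ^ m * INR j) by (field; lra).
  replace (INR i * / 2 ^ m * (2 ^ n * 2 ^ m)) with (2 ^ n * INR i) by (field; lra). lra.
Qed.

Lemma dy_le (Y : TopSpace) A W : paracompact Y ->
  is_closed Y A -> is_open Y W -> (forall z, A z -> W z) ->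
  forall n j m i, (j <= 2 ^ n)%nat -> (i <= 2 ^ m)%nat -> dv n j <= dv m i ->
  forall z, fst (lev Y A W n j) z -> snd (lev Y A W m i) z.
Proof.
  intros HP HA HW HAW n j m i Hj Hi Hle z Hz.
  pose proof (inv_all Y A W HP HA HW HAW (n + m)) as HI.
  rewrite <- (lev_lift Y A W n m j) in Hz. rewrite <- (lev_lift Y A W m n i).
  rewrite (Nat.add_comm m n). apply dv_cmp in Hle.
  assert (Hb : (2 ^ n * i <= 2 ^ (n + m))%nat)
    by (rewrite Nat.pow_add_r; apply Nat.mul_le_mono_l; exact Hi).
  destruct HI as [I1 I2].
  destruct (Nat.eq_dec (2 ^ m * j) (2 ^ n * i)) as [He|Hne].
  - rewrite <- He. apply (I1 _); [lia|exact Hz].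
  - apply (I1 _ Hb). apply (chain_level Y A W (n + m) (conj I1 I2) (2 ^ m * j)); [lia|exact Hb|].
    apply (I1 _); [lia|exact Hz].
Qed.

Lemma dy_lt (Y : TopSpace) A W : paracompact Y ->
  is_closed Y A -> is_open Y W -> (forall z, A z -> W z) ->
  forall n j m i, (j <= 2 ^ n)%nat -> (i <= 2 ^ m)%nat -> dv n j < dv m i ->
  forall z, snd (lev Y A W n j) z -> fst (lev Y A W m i) z.
Proof.
  intros HP HA HW HAW n j m i Hj Hi Hlt z Hz.
  pose proof (inv_all Y A W HP HA HW HAW (n + m)) as HI.
  rewrite <- (lev_lift Y A W n m j) in Hz. rewrite <- (lev_lift Y A W m n i).
  rewrite (Nat.add_comm m n). apply dv_cmp_lt in Hlt.
  assert (Hb : (2 ^ n * i <= 2 ^ (n + m))%nat)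
    by (rewrite Nat.pow_add_r; apply Nat.mul_le_mono_l; exact Hi).
  apply (chain_level Y A W (n + m) HI (2 ^ m * j)); [lia|exact Hb|exact Hz].
Qed.

Lemma lub_gt (E : R -> Prop) m c : is_lub E m -> c < m -> exists s, E s /\ c < s.
Proof.
  intros [Hu Hl] Hc. apply NNPP. intro Hn. assert (m <= c); [|lra].
  apply Hl. intros s Es. apply Rnot_lt_le. intro. apply Hn. exists s. auto.
Qed.

Definition lubf (E : R -> Prop) : R := epsilon (inhabits 0) (is_lub E).

Lemma lubf_ok (E : R -> Prop) c : (exists s, E s) -> (forall s, E s -> s <= c) -> is_lub E (lubf E).
Proof.
  intros Hne Hb. unfold lubf. apply epsilon_spec.
  destruct (completeness E) as [m Hm]; [exists c; exact Hb | exact Hne | exists m; exact Hm].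
Qed.

Lemma dv_nonneg n j : 0 <= dv n j.
Proof. unfold dv. unfold Rdiv. apply Rmult_le_pos; [apply pos_INR | left; apply Rinv_0_lt_compat, pow_lt; lra]. Qed.

Lemma dv_le1 n j : (j <= 2 ^ n)%nat -> dv n j <= 1.
Proof.
  intro H. unfold dv. apply le_INR in H. rewrite pow_INR in H.
  replace (INR 2) with 2 in H by (simpl; lra).
  assert (0 < 2 ^ n) by (apply pow_lt; lra).
  apply (Rmult_le_reg_r (2 ^ n)); [lra|]. unfold Rdiv. rewrite Rmult_assoc, Rinv_l; lra.
Qed.

Lemma urysohn (Y : TopSpace) (A W : Y -> Prop) : paracompact Y ->
  is_closed Y A -> is_open Y W -> (forall z, A z -> W z) ->
  exists phi : Y -> R, rcontinuous Y phi /\ (forall y, 0 <= phi y <= 1) /\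
    (forall y, A y -> phi y = 1) /\ (forall y, 0 < phi y -> W y).
Proof.
  intros HP HA HW HAW.
  set (T := fun y s => s = 0 \/ exists n j, (j <= 2 ^ n)%nat /\ s = 1 - dv n j /\ fst (lev Y A W n j) y).
  set (phi := fun y => lubf (T y)).
  assert (Tb : forall y s, T y s -> 0 <= s <= 1).
  { intros y s [-> | [n [j [Hj [-> _]]]]]; [lra|].
    pose proof (dv_nonneg n j). pose proof (dv_le1 n j Hj). lra. }
  assert (Hlub : forall y, is_lub (T y) (phi y)).
  { intro y. apply (lubf_ok _ 1); [exists 0; left; reflexivity|]. intros s Hs. apply (Tb y s Hs). }
  assert (Hge : forall y s, T y s -> s <= phi y) by (intros y s Hs; apply (proj1 (Hlub y)); exact Hs).
  assert (Hle : forall y c, (forall s, T y s -> s <= c) -> phi y <= c)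
    by (intros y c Hc; apply (proj2 (Hlub y)); exact Hc).
  assert (Hrange : forall y, 0 <= phi y <= 1).
  { intro y. split; [apply Hge; left; reflexivity|]. apply Hle. intros s Hs. apply (Tb y s Hs). }
  pose proof (inv_all Y A W HP HA HW HAW) as HI.
  exists phi. split; [|split; [exact Hrange|split]].
  - intros U HU. apply open_local. intros y Uy.
    destruct (HU (phi y) Uy) as [r [Hr Hball]].
    assert (N1 : exists N, is_open Y N /\ N y /\ forall z, N z -> phi y - r < phi z).
    { destruct (lub_gt _ _ (phi y - r) (Hlub y)) as [s [Ts Hs]]; [lra|].
      destruct Ts as [-> | [n [j [Hj [-> Hy]]]]].
      - exists (fun _ => True). split; [apply open_full|]. split; [exact I|].
        intros z _. pose proof (Hrange z). lra.
      - exists (fst (lev Y A W n j)). split; [apply (proj1 (HI n) j Hj)|]. split; [exact Hy|].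
        intros z Hz. assert (1 - dv n j <= phi z); [|lra].
        apply Hge. right. exists n, j. auto. }
    assert (N2 : exists N, is_open Y N /\ N y /\ forall z, N z -> phi z < phi y + r).
    { destruct (Rlt_or_le 1 (phi y + r)) as [Hb | Hb].
      - exists (fun _ => True). split; [apply open_full|]. split; [exact I|].
        intros z _. pose proof (Hrange z). lra.
      - pose proof (Hrange y).
        destruct (dyadic_dense (1 - (phi y + r)) (1 - phi y)) as [n [j [Hj [H1 H2]]]]; [lra|lra|lra|].
        destruct (dyadic_dense (dv n j) (1 - phi y)) as [m [i [Hi [H3 H4]]]];
          [apply dv_nonneg|exact H2|lra|].
        fold (dv m i) in H3, H4. fold (dv n j) in H1, H2.
        assert (nyi : ~ fst (lev Y A W m i) y).
        { intro Hy. assert (1 - dv m i <= phi y); [|lra]. apply Hge. right. exists m, i. auto. }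
        exists (fun z => ~ snd (lev Y A W n j) z). split; [exact (proj1 (proj2 (proj1 (HI n) j Hj)))|].
        split.
        + intro Hy. apply nyi. exact (dy_lt Y A W HP HA HW HAW n j m i Hj Hi H3 y Hy).
        + intros z Hz. assert (phi z <= 1 - dv n j); [|lra]. apply Hle.
          intros s [-> | [n' [j' [Hj' [-> Hz']]]]]; [lra|].
          destruct (Rle_or_lt (dv n' j') (dv n j)) as [Hc|Hc]; [|lra].
          exfalso. apply Hz. exact (dy_le Y A W HP HA HW HAW n' j' n j Hj' Hj Hc z Hz'). }
    destruct N1 as [N1 [HN1 [N1y HN1z]]]. destruct N2 as [N2 [HN2 [N2y HN2z]]].
    exists (fun z => N1 z /\ N2 z). split; [apply open_inter; auto|]. split; [auto|].
    intros z [Hz1 Hz2]. apply Hball. specialize (HN1z z Hz1). specialize (HN2z z Hz2).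
    unfold Rabs. destruct (Rcase_abs (phi y - phi z)); lra.
  - intros y Ay. apply Rle_antisym; [apply Hrange|]. apply Hge. right. exists 0%nat, 0%nat.
    split; [simpl; lia|]. split; [unfold dv; simpl; lra|]. apply (HI 0%nat). exact Ay.
  - intros y Hy. destruct (lub_gt _ _ 0 (Hlub y) Hy) as [s [Ts Hs]].
    destruct Ts as [-> | [n [j [Hj [-> Hyj]]]]]; [lra|].
    exact (proj2 (proj2 (proj2 (proj1 (HI n) j Hj))) y Hyj).
Qed.

Lemma Rabs_lt_both a b r : Rabs (a - b) < r -> a - r < b /\ b < a + r.
Proof. unfold Rabs. destruct (Rcase_abs (a - b)); intro; lra. Qed.

Lemma In_dec_cl {A : Type} (a : A) (l : list A) : In a l \/ ~ In a l.
Proof. apply classic. Qed.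

Lemma key_eps (Y : TopSpace) (Good : (Y -> Prop) -> R -> Prop) : paracompact Y ->
  (forall y, exists O d, is_open Y O /\ O y /\ 0 < d /\ d <= 1 /\ Good O d) ->
  exists eps : Y -> R, rcontinuous Y eps /\ (forall y, 0 < eps y <= 1) /\
    forall y, exists O d, Good O d /\ O y /\ eps y <= d.
Proof.
  intros HPc Hcov. pose proof HPc as [Hh HP].
  set (I := {p : (Y -> Prop) * R | is_open Y (fst p) /\ 0 < snd p /\ snd p <= 1 /\ Good (fst p) (snd p)}).
  destruct (HP I (fun i => fst (proj1_sig i))) as [J [P [HPo [HPcv [HPr HPl]]]]].
  - intro i. exact (proj1 (proj2_sig i)).
  - intro x. destruct (Hcov x) as [O [d [HO [Ox [Hd [Hd1 HG]]]]]].
    assert (Pr : is_open Y (fst (O, d)) /\ 0 < snd (O, d) /\ snd (O, d) <= 1 /\ Good (fst (O, d)) (snd (O, d)))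
      by (simpl; auto).
    exists (exist _ (O, d) Pr). exact Ox.
  - destruct (choice_fun _ HPr) as [rho Hrho].
    destruct (shrink_pc Y J P HPc HPo HPcv) as [C [HCc [HCP HCcv]]].
    assert (Hur : forall m, exists phi : Y -> R, rcontinuous Y phi /\ (forall y, 0 <= phi y <= 1) /\
              (forall y, C m y -> phi y = 1) /\ (forall y, 0 < phi y -> P m y)).
    { intro m. apply urysohn; auto. }
    destruct (choice_fun _ Hur) as [phi Hphi].
    set (d := fun m => snd (proj1_sig (rho m))).
    assert (Hd : forall m, 0 < d m <= 1).
    { intro m. unfold d. destruct (proj2_sig (rho m)) as [_ [H1 [H2 _]]]. split; assumption. }
    set (E := fun y s => exists m, s = d m / 2 * phi m y).
    assert (Eb : forall y s, E y s -> 0 <= s <= 1 / 2).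
    { intros y s [m ->]. destruct (Hphi m) as [_ [Hr _]]. specialize (Hr y). specialize (Hd m).
      split; [apply Rmult_le_pos; lra|]. nra. }
    set (eps := fun y => lubf (E y)).
    assert (Hlub : forall y, is_lub (E y) (eps y)).
    { intro y. apply (lubf_ok _ (1 / 2)).
      - destruct (HPcv y) as [m _]. exists (d m / 2 * phi m y). exists m. reflexivity.
      - intros s Hs. apply (Eb y s Hs). }
    assert (Hge : forall y s, E y s -> s <= eps y) by (intros y s Hs; apply (proj1 (Hlub y)); exact Hs).
    assert (Hle : forall y c, (forall s, E y s -> s <= c) -> eps y <= c)
      by (intros y c Hc; apply (proj2 (Hlub y)); exact Hc).
    assert (Hpos : forall y, 0 < eps y).
    { intro y. destruct (HCcv y) as [m Hm]. specialize (Hd m).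
      assert (d m / 2 <= eps y); [|lra]. apply Hge. exists m.
      destruct (Hphi m) as [_ [_ [H1 _]]]. rewrite (H1 y Hm). ring. }
    assert (Hub : forall y, eps y <= 1 / 2).
    { intro y. apply Hle. intros s Hs. apply (Eb y s Hs). }
    exists eps. split; [|split].
    + intros U HU. apply open_local. intros y Uy.
      destruct (HU (eps y) Uy) as [r [Hr Hball]].
      destruct (HPl y) as [Q [HQ [Qy [l Hl]]]].
      assert (Hzero : forall m z, Q z -> ~ In m l -> phi m z = 0).
      { intros m z Qz Hn. destruct (Hphi m) as [_ [Hrg [_ Hsup]]].
        specialize (Hrg z). destruct (Rle_lt_or_eq_dec 0 (phi m z) (proj1 Hrg)) as [h|h]; [|auto].
        exfalso. apply Hn. apply Hl. exists z. split; [exact Qz|]. apply Hsup, h. }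
      exists (fun z => Q z /\ forall m, In m l -> Rabs (phi m y - phi m z) < r).
      split; [|split].
      * apply open_inter; [exact HQ|]. apply open_inter_list. intros m _.
        destruct (Hphi m) as [Hc _]. apply (Hc (fun t => Rabs (phi m y - t) < r)).
        intros t Ht. exists (r - Rabs (phi m y - t)). split; [lra|].
        intros u Hu. pose proof (Rabs_triang (phi m y - t) (t - u)).
        replace (phi m y - t + (t - u)) with (phi m y - u) in H by ring. lra.
      * split; [exact Qy|]. intros m _. rewrite Rminus_diag, Rabs_R0. exact Hr.
      * intros z [Qz Hz]. apply Hball.
        assert (U1 : eps z <= eps y + r / 2).
        { apply Hle. intros s [m ->]. destruct (In_dec_cl m l) as [Hin | Hnin].
          - destruct (Rabs_lt_both _ _ _ (Hz m Hin)) as [h1 h2].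
            assert (d m / 2 * phi m y <= eps y) by (apply Hge; exists m; reflexivity).
            specialize (Hd m). nra.
          - rewrite (Hzero m z Qz Hnin). assert (0 <= eps y) by (pose proof (Hpos y); lra). lra. }
        assert (L1 : eps y - r < eps z).
        { destruct (lub_gt _ _ (eps y - r / 2) (Hlub y)) as [s [[m ->] Hs]]; [lra|].
          destruct (In_dec_cl m l) as [Hin | Hnin].
          - destruct (Rabs_lt_both _ _ _ (Hz m Hin)) as [h1 h2].
            assert (d m / 2 * phi m z <= eps z) by (apply Hge; exists m; reflexivity).
            specialize (Hd m). nra.
          - rewrite (Hzero m y Qy Hnin) in Hs. pose proof (Hpos z). lra. }
        unfold Rabs. destruct (Rcase_abs (eps y - eps z)); lra.
    + intro y. split; [apply Hpos|]. pose proof (Hub y). lra.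
    + intro y. destruct (lub_gt _ _ (eps y / 2) (Hlub y)) as [s [[m ->] Hs]];
        [pose proof (Hpos y); lra|].
      destruct (Hphi m) as [_ [Hrg [_ Hsup]]]. specialize (Hrg y). specialize (Hd m).
      assert (Hp : 0 < phi m y).
      { destruct (Rle_lt_or_eq_dec 0 (phi m y) (proj1 Hrg)) as [h|h]; [exact h|].
        rewrite <- h in Hs. pose proof (Hpos y). lra. }
      exists (fst (proj1_sig (rho m))), (d m). split; [|split].
      * destruct (proj2_sig (rho m)) as [_ [_ [_ HG]]]. exact HG.
      * apply Hrho, Hsup, Hp.
      * nra.
Qed.

Lemma ball_mopen (M : MetricSpace) (q : M) r : mopen M (fun p => Defs.dist M q p < r).
Proof.
  destruct (dist_metric M) as [_ [_ [_ Htri]]].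
  intros p Hp. exists (r - Defs.dist M q p). split; [lra|].
  intros u Hu. pose proof (Htri q p u). lra.
Qed.

Lemma fold_min {A : Type} (w : A -> R) (L : list A) :
  (forall a, In a L -> 0 < w a) ->
  0 < fold_right (fun a acc => Rmin (w a) acc) 1 L <= 1 /\
  forall a, In a L -> fold_right (fun a acc => Rmin (w a) acc) 1 L <= w a.
Proof.
  induction L as [|b L IH]; intro Hp; simpl.
  - split; [lra | intros a []].
  - destruct IH as [[IH1 IH2] IH3]; [intros a Ha; apply Hp; right; exact Ha|].
    assert (0 < w b) by (apply Hp; left; reflexivity).
    split; [split; [apply Rmin_glb_lt; lra | eapply Rle_trans; [apply Rmin_r | lra]]|].
    intros a [<- | Ha]; [apply Rmin_l|]. eapply Rle_trans; [apply Rmin_r | apply IH3, Ha].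
Qed.

Theorem lemma2p3 (M : MetricSpace) (X Y : TopSpace) (Z : M -> Prop) (n : nat)
    (f : X -> Y) (H : Y -> Prop) (k : nat) :
  complete M -> mclosed M Z ->
  paracompact X -> paracompact Y ->
  perfect_map X Y f -> (forall y, exists x, f x = y) -> dim_map_le X Y f n ->
  is_closed Y H -> (1 <= k)%nat ->
  ((metrizable X /\ metrizable Y) \/ (forall p, Z p)) ->
  sl_open X M (Rnf X Y M f n H Z k).
Proof.
  intros _ HZ _ HYp [Hfc [Hfcl Hfcomp]] _ _ HH _ _ g [_ HgR] Hgc.
  destruct (dist_metric M) as [Hnn [Heq [Hsym Htri]]].
  set (Good := fun (O : Y -> Prop) (d : R) => forall y', O y' -> H y' ->
    exists (I : Type) (V : I -> M -> Prop), (forall i, mopen M (V i)) /\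
      (forall x, f x = y' -> forall p, Z p -> Defs.dist M p (g x) < d -> exists i, V i p) /\
      (forall i a b, V i a -> V i b -> Defs.dist M a b <= 1 / INR k) /\
      order_le V (fun _ => True) n).
  assert (Hcov : forall y, exists O d, is_open Y O /\ O y /\ 0 < d /\ d <= 1 /\ Good O d).
  { intro y. destruct (classic (H y)) as [Hy | Hy].
    2: { exists (fun z => ~ H z), 1. split; [exact HH|]. split; [exact Hy|].
         split; [lra|]. split; [lra|]. intros y' Hy' Hy''. contradiction. }
    destruct (HgR y Hy) as [I [V [Vo [Vcov [Vmesh Vord]]]]].
    set (Pr := fun x rho => 0 < rho /\ forall p, Defs.dist M (g x) p < 2 * rho -> Z p -> exists i, V i p).
    assert (Hex : forall x, f x = y -> exists rho, Pr x rho).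
    { intros x Hx. destruct (classic (Z (g x))) as [Zg | nZg].
      - destruct (Vcov x Hx Zg) as [i Hi]. destruct (Vo i (g x) Hi) as [r [Hr Hb]].
        exists (r / 2). split; [lra|]. intros p Hp _. exists i. apply Hb. lra.
      - destruct (HZ (g x) nZg) as [r [Hr Hb]].
        exists (r / 2). split; [lra|]. intros p Hp Zp. exfalso. apply (Hb p); [lra|exact Zp]. }
    set (Ix := {xr : X * R | f (fst xr) = y /\ Pr (fst xr) (snd xr)}).
    set (Ux := fun (i : Ix) (x' : X) => Defs.dist M (g (fst (proj1_sig i))) (g x') < snd (proj1_sig i)).
    destruct (Hfcomp y Ix Ux) as [L HL].
    - intro i. exact (Hgc _ (ball_mopen M _ _)).
    - intros x Hx. destruct (Hex x Hx) as [rho Hrho].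
      exists (exist _ (x, rho) (conj Hx Hrho)). unfold Ux; simpl.
      rewrite (proj2 (Heq (g x) (g x)) eq_refl). exact (proj1 Hrho).
    - set (d0 := fold_right (fun a acc => Rmin (snd (proj1_sig a)) acc) 1 L).
      destruct (fold_min (fun a : Ix => snd (proj1_sig a)) L) as [[Hd0 Hd1] Hd2].
      { intros a _. destruct (proj2_sig a) as [_ [H0 _]]. exact H0. }
      fold d0 in Hd0, Hd1, Hd2.
      set (W := fun x' => exists i, In i L /\ Ux i x').
      assert (HWo : is_open X W).
      { apply open_idx. intro i. apply open_cond. exact (Hgc _ (ball_mopen M _ _)). }
      set (O := fun y' => ~ exists x, ~ W x /\ f x = y').
      exists O, d0. split; [|split; [|split; [exact Hd0|split; [exact Hd1|]]]].
      + apply (Hfcl (fun x => ~ W x)). unfold is_closed.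
        apply (open_ext X W); [intro; tauto | exact HWo].
      + intros [x [nW Hx]]. apply nW. destruct (HL x Hx) as [i [Hi Hu]]. exists i. auto.
      + intros y' Oy' Hy'. exists I, V. split; [exact Vo|]. split; [|split; [exact Vmesh|exact Vord]].
        intros x Hx p Zp Hp.
        assert (Wx : W x) by (apply NNPP; intro nW; apply Oy'; exists x; auto).
        destruct Wx as [i [Hi Hu]]. destruct (proj2_sig i) as [_ [_ HPi]].
        apply HPi; [|exact Zp].
        pose proof (Htri (g (fst (proj1_sig i))) (g x) p) as T1. rewrite (Hsym (g x) p) in T1.
        pose proof (Hd2 i Hi) as T2. assert (T3 : d0 <= snd (proj1_sig i)) by exact T2. unfold Ux in Hu. lra. }
  destruct (key_eps Y Good HYp Hcov) as [eps [Hec [Hepos Hegood]]].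
  exists (fun x => eps (f x)). split; [|split].
  - intros U HU. apply (Hfc (fun y => U (eps y))). apply Hec, HU.
  - intro x. apply Hepos.
  - intros h Hhc Hhd. split; [exact Hhc|]. intros y Hy.
    destruct (Hegood y) as [O [d [HG [Oy Hle]]]].
    destruct (HG y Oy Hy) as [I [V [Vo [Vcov [Vm Vord]]]]].
    exists I, V. split; [exact Vo|]. split; [|split; [exact Vm | exact Vord]].
    intros x Hx Zh. apply (Vcov x Hx (h x) Zh). specialize (Hhd x). rewrite Hx in Hhd. lra.
Qed.
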